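(* Let $p$ be an imitation kernel on a finite set $G$ with $G$-stochastic function $P_{(\cdot)}$, and let $R\subset G$ be the union of all closed intercommunicating classes of $P_{(\cdot)}$. Let $p_R$ be the restriction of $p$ to $R$, i.e. the kernel on $R$ given by $p_R(g\mid\mathbf w)=\sum_{k\in\mathcal A}\theta_kP_{(k)}(w_{-k},g)$ for $g\in R$, $\mathbf w\in R^{-\mathbb N_+}$. Then $\mathcal G(p)=\mathcal G(p_R)$, where laws on $R^{\mathbb Z}$ are identified with laws on $G^{\mathbb Z}$ supported by $R^{\mathbb Z}$. In particular every $\mu\in\mathcal G(p)$ satisfies $\mu(R^{\mathbb Z})=1$.
   Context: $G$ finite. An imitation kernel is $p(g\mid\mathbf w)=\sum_{k\in\mathcal A}\theta_kP_{(k)}(w_{-k},g)$, $\mathbf w=(w_{-1},w_{-2},\dots)\in G^{-\mathbb N_+}$, with $\mathcal A\subset\mathbb N_+$, $\theta$ a probability on $\mathcal A$ with $\theta_k>0$ for $k\in\mathcal A$, and stochastic matrices $P_{(k)}$ on $G$; the $G$-stochastic function is $k\mapsto P_{(k)}$. A law of $\mathbf X=(X_n)_{n\in\mathbb Z}$ is compatible with $p$ if $P(X_n=g\mid X_{n-1},X_{n-2},\dots)=p(g\mid X_{n-1},X_{n-2},\dots)$ a.s. for all $n,g$; $\mathcal G(p)$ is the set of compatible laws. Words: $\mathcal A^*=\bigcup_{n\ge1}\mathcal A^n$, $P_{\mathbf a}=P_{(a_n)}\cdots P_{(a_1)}$. $i$ communicates with $j\ne i$ if $P_{\mathbf a}(i,j)>0$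 for some word; intercommunication (including each state with itself) partitions $G$ into classes; a class $C$ is closed if $i\in C$ communicating with $j$ implies $j\in C$ (rows of $P_{(k)}$ indexed by $R$ are then supported in $R$, so $p_R$ is a kernel on $R$). *)

(* Defs.v *)
From HB Require Import structures.
From mathcomp Require Import all_boot all_order all_algebra.
From mathcomp Require Import all_classical all_reals.
From mathcomp Require Import ereal sequences measure lebesgue_integral probability.
Set Implicit Arguments. Unset Strict Implicit. Unset Printing Implicit Defensive.
Import Order.TTheory GRing.Theory Num.Theory.
Local Open Scope classical_set_scope.
Local Open Scope ring_scope.

Section Imitation.
Variable R : realType.

Section Comm.
Variables (G : finType) (A : pred nat) (P : nat -> G -> G -> R).

Definition stochastic (M : G -> G -> R) : Prop :=
  (forall i j, 0 <= M i j) /\ (forall i, \sum_(j : G) M i j = 1).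

Definition idm : G -> G -> R := fun i j => if i == j then 1 else 0.
Definition mulm (M N : G -> G -> R) : G -> G -> R :=
  fun i j => \sum_(l : G) M i l * N l j.

(* For the word a = [:: a_1; ...; a_n],  Pword a = P_(a_n) * ... * P_(a_1). *)
Fixpoint Pword (a : seq nat) : G -> G -> R :=
  if a is k :: a' then mulm (Pword a') (P k) else idm.

Definition communicates (i j : G) : Prop :=
  exists a : seq nat, [/\ a != [::], all A a & 0 < Pword a i j].

Definition intercomm (i j : G) : Prop :=
  i = j \/ (communicates i j /\ communicates j i).

Definition comm_class (i : G) : set G := [set j | intercomm i j].

Definition closed_set (C : set G) : Prop :=
  forall i j, C i -> communicates i j -> C j.

Definition recurrent_part : set G :=
  [set j | exists i, comm_class i j /\ closed_set (comm_class i)].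
End Comm.

(* A past w in T^{-N_+} is encoded as w : nat -> T with w k = w_{-(k+1)}. *)
Definition imitation_kernel (T : Type) (A : pred nat) (theta : nat -> R)
  (Q : nat -> T -> T -> R) : T -> (nat -> T) -> \bar R :=
  fun g w => (\sum_(k <oo | A k) ((theta k * Q k (w k.-1) g)%:E))%E.

Section Compat.
Context {d : measure_display} {Omega : measurableType d}.
Variable (Pr : probability Omega R) (T : Type).

Definition past (X : int -> Omega -> T) (n : int) (om : Omega) : nat -> T :=
  fun k => X (n - (k.+1)%:Z) om.

Definition past_gen (X : int -> Omega -> T) (n : int) : set (set Omega) :=
  [set S | exists m t, m < n /\ S = [set om | X m om = t]].

(* X is compatible with the kernel q: each X_n is a (discrete) random variable
   and P(X_n = t | X_{n-1}, X_{n-2}, ...) = q(t | X_{n-1}, X_{n-2}, ...) a.s.,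
   i.e. (definition of conditional probability) for every B in sigma(X_m, m<n),
   P({X_n = t} /\ B) = int_B q(t | past) dP. *)
Definition compatible (q : T -> (nat -> T) -> \bar R) (X : int -> Omega -> T)
  : Prop :=
  (forall n t, measurable [set om | X n om = t]) /\
  (forall n t (B : set Omega), <<s past_gen X n >> B ->
     Pr ([set om | X n om = t] `&` B) =
     (\int[Pr]_(om in B) q t (past X n om))%E).
End Compat.

End Imitation.

(* Main.v *)
Require Import Defs.
From HB Require Import structures.
From mathcomp Require Import all_boot all_order all_algebra.
From mathcomp Require Import all_classical all_reals.
From mathcomp Require Import ereal sequences measure lebesgue_integral probability.
From mathcomp Require Import lebesgue_measure measurable_realfun numfun.
Set Implicit Arguments. Unset Strict Implicit. Unset Printing Implicit Defensive.
Import Order.TTheory GRing.Theory Num.Theory.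
Local Open Scope classical_set_scope.
Local Open Scope ring_scope.

Section Comb.
Variables (R : realType) (G : finType) (A : pred nat) (P : nat -> G -> G -> R).
Hypothesis hP : forall k, A k -> stochastic (P k).

Lemma P_ge0 k i j : A k -> 0 <= P k i j.
Proof. by move=> /hP[]. Qed.

Lemma Pword_ge0 a i j : all A a -> 0 <= Pword P a i j.
Proof.
elim: a j => [|k a IH] j /=; first by rewrite /idm; case: eqP.
move=> /andP[Ak Aa]; rewrite /mulm; apply: sumr_ge0 => l _.
by apply: mulr_ge0; [exact: IH|exact: P_ge0].
Qed.

Lemma Pword_nil i j : 0 < Pword P [::] i j -> i = j.
Proof. by rewrite /= /idm; case: eqP => // _; rewrite ltxx. Qed.

Lemma sum_pos_ex (T : finType) (f : T -> R) : 0 < \sum_t f t -> exists t, 0 < f t.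
Proof.
move=> H; apply/not_existsP => /= H'.
have : \sum_t f t <= 0 by apply: sumr_le0 => t _; rewrite leNgt; apply/negP/H'.
by rewrite leNgt H.
Qed.

Lemma Pword_cons k a i j : all A (k :: a) -> 0 < Pword P (k :: a) i j ->
  exists l, 0 < Pword P a i l /\ 0 < P k l j.
Proof.
move=> /andP[Ak Aa] /sum_pos_ex[l Hl]; exists l.
have h1 := Pword_ge0 i l Aa; have h2 := P_ge0 l j Ak.
move: Hl; rewrite lt0r mulf_eq0 negb_or => /andP[/andP[n1 n2] _].
by split; rewrite lt0r ?n1 ?n2.
Qed.

Lemma sum_pos_term (T : finType) (f : T -> R) t : (forall s, 0 <= f s) -> 0 < f t -> 0 < \sum_s f s.
Proof.
move=> f0 ft; rewrite (bigD1 t) //=; apply: (lt_le_trans ft).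
by rewrite lerDl; apply: sumr_ge0.
Qed.

Lemma Pword_cat a b i l j : all A a -> all A b -> 0 < Pword P a i l -> 0 < Pword P b l j ->
  0 < Pword P (b ++ a) i j.
Proof.
move=> Aa; elim: b j => [|k b IH] j /=.
  by move=> _ H /Pword_nil <-.
move=> /andP[Ak Ab] H1 H2.
have [m [h1 h2]] := @Pword_cons k b l j (introT andP (conj Ak Ab)) H2.
rewrite /mulm; apply: (@sum_pos_term _ _ m).
  move=> s; apply: mulr_ge0; last exact: P_ge0.
  by apply: Pword_ge0; rewrite all_cat Ab Aa.
by apply: mulr_gt0 => //; exact: IH.
Qed.

Lemma comm_trans i l j : communicates A P i l -> communicates A P l j -> communicates A P i j.
Proof.
move=> [a [a0 Aa Ha]] [b [b0 Ab Hb]]; exists (b ++ a); split.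
- by case: b b0 {Ab Hb}.
- by rewrite all_cat Ab Aa.
- exact: Pword_cat Ha Hb.
Qed.

Lemma comm_step k i j : A k -> 0 < P k i j -> communicates A P i j.
Proof.
move=> Ak H; exists [:: k]; split => //=; first by rewrite Ak.
rewrite /mulm (bigD1 i) //= /idm eqxx mul1r big1 ?addr0 // => l /negbTE.
by rewrite eq_sym => ->; rewrite mul0r.
Qed.

Lemma rec_closed k y x : A k -> recurrent_part A P y -> 0 < P k y x -> recurrent_part A P x.
Proof.
move=> Ak [i [Hy Hc]] Hp; exists i; split => //.
exact: (Hc y x Hy (comm_step Ak Hp)).
Qed.

Lemma rec_P0 k y x : A k -> recurrent_part A P y -> ~ recurrent_part A P x -> P k y x = 0.
Proof.
move=> Ak Hy Hx; apply/eqP; rewrite eq_le P_ge0 // andbT leNgt; apply/negP => H.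
exact/Hx/(rec_closed Ak Hy H).
Qed.

Definition reach (x : G) : {set G} := [set z | `[< z = x \/ communicates A P x z >]].

Lemma escape x : exists y, recurrent_part A P y /\ (y = x \/ communicates A P x y).
Proof.
have xin : x \in reach x by rewrite inE; apply/asboolP; left.
pose y := [arg min_(y < x in reach x) #|reach y|].
have [yin ymin] : y \in reach x /\ forall z, z \in reach x -> (#|reach y| <= #|reach z|)%N.
  by rewrite /y; case: arg_minnP.
have yx : y = x \/ communicates A P x y by move: yin; rewrite inE => /asboolP.
have back : forall j, communicates A P y j -> communicates A P j y.
  move=> j cyj; apply: contrapT => ncj.
  have jin : j \in reach x.
    rewrite inE; apply/asboolP; right; case: yx => [<-|cxy] //; exact: comm_trans cxy cyj.
  have : reach j \proper reach y.
    apply/properP; split.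
      apply/fintype.subsetP => z; rewrite !inE => /asboolP hz; right; move/asboolP: hz => -[->|cjz] //.
      exact: comm_trans cyj cjz.
    exists y; first by rewrite inE; apply/asboolP; left.
    rewrite inE; apply/negP => /asboolP [eyj|cjy]; apply: ncj => //.
    by rewrite -eyj in cyj *.
  move=> /proper_card; rewrite ltnNge ymin //.
exists y; split; last exact: yx.
exists y; split; first by left.
move=> i j [<-|[cyi cii]] cij; right.
  by split => //; exact: back.
have cyj := comm_trans cyi cij; split => //; exact: back.
Qed.

End Comb.

Lemma flow (R : realType) (G : finType) (T : pred G) (M : G -> R) (Q : G -> G -> R) :
  (forall y, 0 <= M y) -> (forall y x, 0 <= Q y x) -> (forall y, \sum_x Q y x <= 1) ->
  (forall y x, ~~ T y -> T x -> Q y x = 0) ->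
  (forall x, T x -> M x <= \sum_y M y * Q y x) ->
  forall y x, T y -> 0 < M y -> 0 < Q y x -> T x /\ 0 < M x.
Proof.
move=> M0 Q0 Q1 QT HM.
pose s y := \sum_(x | T x) Q y x.
have s1 y : s y <= 1.
  apply: le_trans (Q1 y); rewrite [leRHS](bigID T) /= lerDl; exact: sumr_ge0.
have key : \sum_(x | T x) \sum_y M y * Q y x = \sum_(y | T y) M y * s y.
  rewrite exchange_big /= (bigID T) /= [X in _ + X]big1 ?addr0.
    by apply: eq_bigr => y _; rewrite /s mulr_sumr.
  move=> y Ty; apply: big1 => x Tx; by rewrite QT // mulr0.
have S1 : \sum_(y | T y) M y * s y <= \sum_(y | T y) M y.
  by apply: ler_sum => y _; rewrite ler_piMr.
have D0 : forall x, T x -> \sum_y M y * Q y x - M x = 0.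
  apply: psumr_eq0P; first by move=> x Tx; rewrite subr_ge0 HM.
  apply/eqP; rewrite eq_le; apply/andP; split; last first.
    by apply: sumr_ge0 => x Tx; rewrite subr_ge0 HM.
  by rewrite sumrB key subr_le0 S1.
have E0 : forall y, T y -> M y * (1 - s y) = 0.
  apply: psumr_eq0P; first by move=> y _; apply: mulr_ge0; rewrite ?subr_ge0.
  apply/eqP; rewrite eq_le; apply/andP; split; last first.
    by apply: sumr_ge0 => y _; apply: mulr_ge0; rewrite ?subr_ge0.
  under eq_bigr do rewrite mulrBr mulr1.
  rewrite sumrB subr_le0 -key.
  apply: le_trans (_ : \sum_(x | T x) \sum_y M y * Q y x <= _) => //.
  by apply: ler_sum => x Tx; rewrite HM.
move=> y x Ty My Qyx.
have sy : s y = 1.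
  by move: (E0 y Ty) => /eqP; rewrite mulf_eq0 gt_eqF //= subr_eq0 => /eqP <-.
have Tx : T x.
  apply: contraT => nTx.
  have : \sum_(x | ~~ T x) Q y x = 0.
    apply/eqP; rewrite eq_le sumr_ge0 // andbT.
    by have := Q1 y; rewrite (bigID T) /= -/(s y) sy -lerBrDl subrr.
  move/psumr_eq0P => /(_ (fun x _ => Q0 y x) x nTx) Q0'.
  by move: Qyx; rewrite Q0' ltxx.
split => //.
have := D0 x Tx => /eqP; rewrite subr_eq0 => /eqP <-.
apply: lt_le_trans (_ : M y * Q y x <= _); first exact: mulr_gt0.
rewrite (bigD1 y) //= lerDl; apply: sumr_ge0 => z _; exact: mulr_ge0.
Qed.

Lemma bigU_mem (Om : Type) (U : eqType) (s : seq U) (b : pred U) (F : U -> set Om) om :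
  (\big[setU/set0]_(t <- s | b t) F t) om <-> exists t, [/\ t \in s, b t & F t om].
Proof.
elim: s => [|u s IH]; first by rewrite big_nil; split => // -[t []].
rewrite big_cons; case: ifPn => bu.
  split.
    case=> [h|/IH [t [ts bt Ft]]]; first by exists u; rewrite mem_head.
    by exists t; rewrite in_cons ts orbT.
  move=> [t []]; rewrite in_cons => /orP [/eqP ->|ts] bt Ft; first by left.
  by right; apply/IH; exists t.
split; first by move/IH => [t [ts bt Ft]]; exists t; rewrite in_cons ts orbT.
move=> [t []]; rewrite in_cons => /orP [/eqP ->|ts] bt Ft; first by rewrite bt in bu.
by apply/IH; exists t.
Qed.

Lemma pred_as_bigU (Om : Type) (U : finType) (Z : Om -> U) (Pt : U -> Prop) :
  [set om | Pt (Z om)] =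
   \big[setU/set0]_(t <- enum U | `[< Pt t >]) [set om | Z om = t].
Proof.
apply/seteqP; split => om /=.
  by move=> H; apply/bigU_mem; exists (Z om); split => //; [rewrite mem_enum|apply/asboolP].
by move/bigU_mem => [t [_ /asboolP ? ->]].
Qed.

Lemma fin_union_gen (Om : Type) (U : finType) (Z : Om -> U) (D : set (set Om)) :
  D set0 -> (forall S1 S2, D S1 -> D S2 -> D (S1 `|` S2)) ->
  (forall t, D [set om | Z om = t]) -> forall Pt : U -> Prop, D [set om | Pt (Z om)].
Proof.
move=> D0 DU DZ Pt.
have -> : [set om | Pt (Z om)] =
   \big[setU/set0]_(t <- enum U | `[< Pt t >]) [set om | Z om = t].
  apply/seteqP; split => om /=.
    by move=> H; apply/bigU_mem; exists (Z om); split => //; [rewrite mem_enum|apply/asboolP].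
  by move/bigU_mem => [t [_ /asboolP ? ->]].
elim: (enum U) => [|t s IH]; first by rewrite big_nil.
by rewrite big_cons; case: ifP => // _; apply: DU.
Qed.

Lemma sigma_setU (T : Type) (G : set (set T)) S1 S2 :
  <<s G >> S1 -> <<s G >> S2 -> <<s G >> (S1 `|` S2).
Proof.
move=> h1 h2.
have -> : S1 `|` S2 = \bigcup_i (if i == 0%N then S1 else S2).
  apply/seteqP; split => x.
    by case=> h; [exists 0%N|exists 1%N].
  by case=> i _; case: ifP => _ h; [left|right].
by apply: sigma_algebra_bigcup => i; case: ifP.
Qed.

Section MeasComp.
Context {d : measure_display} {Om : measurableType d} {R : realType}.

Lemma meas_pred (U : finType) (Z : Om -> U) :
  (forall t, measurable [set om | Z om = t]) -> forall Pt : U -> Prop,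
  measurable [set om | Pt (Z om)].
Proof.
move=> mZ; apply: fin_union_gen => //; first by move=> *; exact: measurableU.
Qed.

Lemma measfun_comp (U : finType) (Z : Om -> U) (h : U -> \bar R) :
  (forall t, measurable [set om | Z om = t]) ->
  measurable_fun setT (fun om => h (Z om)).
Proof.
move=> mZ _ Y mY; rewrite setTI.
exact: (meas_pred mZ (fun t => Y (h t))).
Qed.

Lemma integral_comp (mu : {measure set Om -> \bar R}) (U : finType) (Z : Om -> U) (c : U -> R) :
  (forall t, measurable [set om | Z om = t]) -> (forall t, 0 <= c t) ->
  (\int[mu]_(om in setT) (c (Z om))%:E =
   \sum_(t : U) (c t)%:E * mu [set om | Z om = t])%E.
Proof.
move=> mZ c0.
have E : forall om, (c (Z om))%:E =
   (\sum_(t : U) (c t * \1_[set om | Z om = t] om)%:E)%E.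
  move=> om; rewrite sumEFin; congr (_%:E).
  rewrite (bigD1 (Z om)) //= indicE mem_set // mulr1 big1 ?addr0 // => t tZ.
  rewrite indicE memNset ?mulr0 //= => eq; by rewrite eq eqxx in tZ.
under eq_integral do rewrite E.
rewrite ge0_integral_sum //; last first.
  by move=> t om _; rewrite lee_fin mulr_ge0.
  move=> t; apply/measurable_EFinP; apply: measurable_funM => //.
apply: eq_bigr => t _.
rewrite (@integralZl_indic _ _ _ _ _ measurableT (fun _ => [set om | Z om = t])) //.
  by rewrite integral_indic // setIT.
by move=> /lt_geF; rewrite c0.
Qed.

Lemma null_pred (mu : {measure set Om -> \bar R}) (U : finType) (Z : Om -> U) (Pt : U -> Prop) :
  (forall t, measurable [set om | Z om = t]) ->
  (forall t, Pt t -> mu [set om | Z om = t] = 0%E) ->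
  mu [set om | Pt (Z om)] = 0%E.
Proof.
move=> mZ h0; rewrite pred_as_bigU.
elim: (enum U) => [|t s IH]; first by rewrite big_nil measure0.
rewrite big_cons; case: ifPn => // /asboolP Pt_t.
apply/eqP; rewrite eq_le measure_ge0 andbT.
apply: le_trans (measureU2 _ _ _) _ => //.
  by apply: bigsetU_measurable.
apply: (@le_trans _ _ (0 + 0)%E); last by rewrite adde0.
apply: leeD; rewrite le_eqVlt; apply/orP; left; apply/eqP; [exact: h0|exact: IH].
Qed.

End MeasComp.

Section Q.
Variables (R : realType) (G : finType) (A : pred nat) (theta : nat -> R) (P : nat -> G -> G -> R).
Hypothesis hA : ~~ A 0%N.
Hypothesis htheta_pos : forall k, A k -> 0 < theta k.
Hypothesis htheta_sum : (\sum_(k <oo | A k) (theta k)%:E)%E = 1%E.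
Hypothesis hP : forall k, A k -> stochastic (P k).

Local Open Scope ereal_scope.

Lemma swap_filt (I : finType) (f : I -> nat -> \bar R) :
  (forall i k, A k -> 0 <= f i k) ->
  \sum_(k <oo | A k) \sum_i f i k = \sum_i \sum_(k <oo | A k) f i k.
Proof.
move=> f0; rewrite eseries_mkcond.
transitivity (\sum_(0 <= k <oo) \sum_i (if A k then f i k else 0)).
  apply: (@eq_eseriesr _ _ _ xpredT) => k _; case: (A k) => //.
  by rewrite big1.
rewrite nneseries_sum.
  2: move=> i k _; case: ifP => // Ak; exact: f0.
apply: eq_bigr => i _. by rewrite [RHS]eseries_mkcond.
Qed.

Definition Qe (y x : G) := \sum_(k <oo | A k) (theta k * P k y x)%:E.

Lemma term_ge0 k y x : A k -> 0 <= (theta k * P k y x)%:E.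
Proof. by move=> Ak; rewrite lee_fin mulr_ge0 ?(ltW (htheta_pos Ak)) ?(P_ge0 hP). Qed.

Lemma Qe_ge0 y x : 0 <= Qe y x.
Proof. by apply: nneseries_ge0 => k _; exact: term_ge0. Qed.

Lemma Qe_sum y : \sum_x Qe y x = 1.
Proof.
rewrite /Qe -swap_filt; last by move=> *; exact: term_ge0.
rewrite -htheta_sum; apply: eq_eseriesr => k Ak.
rewrite sumEFin -mulr_sumr; have [_ ->] := hP Ak; by rewrite mulr1.
Qed.

Lemma Qe_le1 y x : Qe y x <= 1.
Proof.
rewrite -(Qe_sum y) (bigD1 x) //= leeDl //; apply: sume_ge0 => z _; exact: Qe_ge0.
Qed.

Lemma Qe_fin y x : Qe y x \is a fin_num.
Proof.
by rewrite ge0_fin_numE ?Qe_ge0 // (le_lt_trans (Qe_le1 y x)) // ltey.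
Qed.

Definition Q y x : R := fine (Qe y x).

Lemma QE y x : Qe y x = (Q y x)%:E.
Proof. by rewrite /Q fineK // Qe_fin. Qed.

Lemma Q_ge0 y x : (0 <= Q y x)%R.
Proof. by rewrite -lee_fin -QE Qe_ge0. Qed.

Lemma Q_sum y : (\sum_x Q y x <= 1)%R.
Proof. by rewrite -lee_fin -sumEFin; under eq_bigr do rewrite -QE; rewrite Qe_sum. Qed.

Lemma Q_pos k y x : A k -> (0 < P k y x)%R -> (0 < Q y x)%R.
Proof.
move=> Ak Pp; rewrite -lte_fin -QE.
apply: (@lt_le_trans _ _ (\sum_(0 <= i < k.+1 | A i) (theta i * P i y x)%:E)).
  rewrite big_mkcond big_nat_recr //= Ak.
  apply: (@lt_le_trans _ _ (theta k * P k y x)%:E).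
    by rewrite lte_fin mulr_gt0 // htheta_pos.
  rewrite leeDr //; apply: sume_ge0 => i _; case: ifP => // Ai; exact: term_ge0.
by apply: nneseries_lim_ge => i _ Ai; exact: term_ge0.
Qed.

Lemma Q_closed y x : recurrent_part A P y -> ~ recurrent_part A P x -> Q y x = 0%R.
Proof.
move=> Ry Rx; rewrite /Q /Qe eseries0 // => k _ Ak.
by rewrite (rec_P0 hP Ak Ry Rx) mulr0.
Qed.

End Q.

Lemma sigmaT (T : Type) (G : set (set T)) : <<s G >> setT.
Proof. by have := @sigma_algebraCD _ setT G set0 (@sigma_algebra0 _ setT G); rewrite setD0. Qed.

Section Part1.
Variables (R : realType) (G : finType) (A : pred nat) (theta : nat -> R) (P : nat -> G -> G -> R).
Hypothesis hA : ~~ A 0%N.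
Hypothesis htheta_pos : forall k, A k -> 0 < theta k.
Hypothesis htheta_sum : (\sum_(k <oo | A k) (theta k)%:E)%E = 1%E.
Hypothesis hP : forall k, A k -> stochastic (P k).
Context {d : measure_display} {Om : measurableType d} (Pr : probability Om R) (X : int -> Om -> G).
Hypothesis hX : compatible Pr (imitation_kernel A theta P) X.

Let mX n t : measurable [set om | X n om = t] := hX.1 n t.

Local Open Scope ereal_scope.

Lemma marg n x : Pr [set om | X n om = x] =
  \sum_(k <oo | A k) \sum_y (theta k * P k y x)%:E * Pr [set om | X (n - k%:Z)%R om = y].
Proof.
have := hX.2 n x setT (@sigmaT _ (past_gen X n)); rewrite setIT => ->.
rewrite /imitation_kernel /past.
under eq_integral do rewrite eseries_mkcond.
rewrite integral_nneseries //.
- rewrite [RHS]eseries_mkcond; apply: (@eq_eseriesr _ _ _ xpredT) => k _ /=.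
  case: ifPn => Ak; last by rewrite integral0.
  rewrite (integral_comp _ (c := fun t => theta k * P k t x)%R) //.
    have k0 : (0 < k)%N by case: k Ak => // Ak; move: hA; rewrite Ak.
    by rewrite prednK.
  by move=> t; rewrite mulr_ge0 ?(ltW (htheta_pos Ak)) ?(P_ge0 hP).
- move=> k; case Ak: (A k); last exact: measurable_cst.
  exact: (measfun_comp (fun t => (theta k * P k t x)%:E) (mX _)).
- by move=> k om _; case Ak: (A k) => //; exact: (term_ge0 htheta_pos hP).
Qed.

Definition Mb y := ereal_sup (range (fun n => Pr [set om | X n om = y])).

Lemma Pr_le_Mb n y : Pr [set om | X n om = y] <= Mb y.
Proof. by apply: ereal_sup_ubound; exists n. Qed.

Lemma Mb_ge0 y : 0 <= Mb y.
Proof. exact: le_trans (measure_ge0 _ _) (Pr_le_Mb 0 y). Qed.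

Lemma Mb_le1 y : Mb y <= 1.
Proof. by apply: ge_ereal_sup => _ [n _ <-]; exact: probability_le1. Qed.

Definition m y : R := fine (Mb y).

Lemma mE y : Mb y = (m y)%:E.
Proof.
by rewrite /m fineK // ge0_fin_numE ?Mb_ge0 // (le_lt_trans (Mb_le1 y)) // ltey.
Qed.

Lemma m_ge0 y : (0 <= m y)%R.
Proof. by rewrite -lee_fin -mE Mb_ge0. Qed.

Lemma m_bound x : (m x <= \sum_y m y * Q A theta P y x)%R.
Proof.
rewrite -lee_fin -mE; apply: ge_ereal_sup => _ [n _ <-]; rewrite marg.
apply: (@le_trans _ _ (\sum_(k <oo | A k) \sum_y (theta k * P k y x)%:E * (m y)%:E)).
  apply: lee_nneseries.
    move=> k _ Ak; apply: sume_ge0 => y _; apply: mule_ge0; first exact: (term_ge0 htheta_pos hP).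
    exact: measure_ge0.
  move=> k Ak; apply: lee_sum => y _; apply: lee_pmul => //; rewrite ?(term_ge0 htheta_pos hP) //.
  by rewrite -mE; exact: Pr_le_Mb.
rewrite swap_filt; last first.
  by move=> y k Ak; apply: mule_ge0; [exact: (term_ge0 htheta_pos hP)|rewrite lee_fin m_ge0].
rewrite -sumEFin; apply: lee_sum => y _.
rewrite EFinM -(QE htheta_pos htheta_sum hP) /Qe -nneseriesZl; last first.
  by move=> k Ak; exact: (term_ge0 htheta_pos hP).
rewrite le_eqVlt; apply/orP; left; apply/eqP; apply: eq_eseriesr => k _; by rewrite muleC.
Qed.

Lemma m0 y : ~ recurrent_part A P y -> m y = 0%R.
Proof.
move=> nRy; apply: contrapT => /eqP my0.
have my : (0 < m y)%R by rewrite lt0r my0 m_ge0.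
pose T := fun z : G => ~~ `[< recurrent_part A P z >].
have QT : forall a b, ~~ T a -> T b -> Q A theta P a b = 0%R.
  move=> a b; rewrite negbK => /asboolP Ra /asboolPn Rb; exact: (Q_closed theta hP Ra Rb).
have fl := @flow R G T m (Q A theta P) m_ge0 (Q_ge0 htheta_pos htheta_sum hP)
   (Q_sum htheta_pos htheta_sum hP) QT (fun x _ => m_bound x).
have Ty : T y by apply/asboolPn.
have clos : forall a j, all A a -> (0 < Pword P a y j)%R -> T j /\ (0 < m j)%R.
  elim=> [|k a IH] j Aa H; first by rewrite -(Pword_nil H).
  have [l [h1 h2]] := Pword_cons hP Aa H.
  move: Aa => /andP[Ak Aa'].
  have [Tl ml] := IH l Aa' h1.
  exact: fl l j Tl ml (Q_pos htheta_pos htheta_sum hP Ak h2).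
have [z [Rz [zy|[a [_ Aa Ha]]]]] := escape hP y.
  by apply: nRy; rewrite -zy.
have [Tz _] := clos a z Aa Ha.
by move/asboolPn: Tz.
Qed.

Lemma Pr_trans n y : ~ recurrent_part A P y -> Pr [set om | X n om = y] = 0.
Proof.
move=> nRy; apply/eqP; rewrite eq_le measure_ge0 andbT.
by apply: le_trans (Pr_le_Mb n y) _; rewrite mE m0.
Qed.

Lemma Pr_notR n : Pr [set om | ~ recurrent_part A P (X n om)] = 0.
Proof. exact: (@null_pred _ _ _ Pr _ (X n) (fun t => ~ recurrent_part A P t) (mX n) (fun t h => Pr_trans n h)). Qed.

Definition Nn (i : nat) := [set om | ~ recurrent_part A P (X (Posz i) om)] `|`
                          [set om | ~ recurrent_part A P (X (Negz i) om)].

Lemma Nn_meas i : measurable (Nn i).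
Proof. by apply: measurableU; exact: (meas_pred (mX _) (fun t => ~ recurrent_part A P t)). Qed.

Lemma Nn_null i : Pr (Nn i) = 0.
Proof.
apply/eqP; rewrite eq_le measure_ge0 andbT.
apply: le_trans (measureU2 _ _ _) _; try exact: (meas_pred (mX _) (fun t => ~ recurrent_part A P t)).
apply: (@le_trans _ _ (0 + 0)%E); last by rewrite adde0.
apply: leeD; rewrite le_eqVlt; apply/orP; left; apply/eqP; exact: Pr_notR.
Qed.

Definition Ev := [set om | forall n, recurrent_part A P (X n om)].

Lemma Ev_eq : Ev = ~` \bigcup_i Nn i.
Proof.
apply/seteqP; split => om /=.
  by move=> H [i _ [h|h]]; apply: h; apply: H.
move=> H n; case: n => i; apply: contrapT => nR; apply: H; exists i => //; [left|right]; exact: nR.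
Qed.

Lemma Ev_meas : measurable Ev.
Proof. rewrite Ev_eq; apply: measurableC; apply: bigcupT_measurable => i; exact: Nn_meas. Qed.

Lemma PrEv : Pr Ev = 1.
Proof.
have mU : measurable (\bigcup_i Nn i) by apply: bigcupT_measurable => i; exact: Nn_meas.
rewrite Ev_eq probability_setC //.
have [B [mB PB sub]] : Pr.-negligible (\bigcup_i Nn i).
  apply: negligible_bigcup => i; exists (Nn i); split => //; [exact: Nn_meas|exact: Nn_null].
have -> : Pr (\bigcup_i Nn i) = 0.
  apply/eqP; rewrite eq_le measure_ge0 andbT; rewrite -PB.
  by apply: le_measure => //; rewrite inE.
by rewrite sube0.
Qed.

Variable y0 : {x : G | `[< recurrent_part A P x >]}.
Definition Yf n om : {x : G | `[< recurrent_part A P x >]} := insubd y0 (X n om).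

Lemma valY n om : val (Yf n om) =
  if `[< recurrent_part A P (X n om) >] then X n om else val y0.
Proof. by rewrite /Yf val_insubd. Qed.

Lemma XY_eq : [set om | forall n, X n om = val (Yf n om)] = Ev.
Proof.
apply/seteqP; split => om /= H n.
  have := H n; rewrite valY; case: ifP => [/asboolP //|_ ->].
  exact/asboolP/(valP y0).
by rewrite valY (asboolT (H n)).
Qed.

Lemma mY n r : measurable [set om | Yf n om = r].
Proof. exact: (meas_pred (mX n) (fun t => insubd y0 t = r)). Qed.

Lemma sigY n : <<s past_gen Yf n >> `<=` <<s past_gen X n >>.
Proof.
apply: smallest_sub; first exact: smallest_sigma_algebra.
move=> S [k [t [kn ->]]].
apply: (@fin_union_gen _ _ (X k) (<<s past_gen X n >>) _ _ _ (fun u => insubd y0 u = t)).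
- exact: sigma_algebra0.
- by move=> S1 S2; exact: sigma_setU.
- by move=> u; apply: sub_sigma_algebra; exists k, u.
Qed.

Lemma sig_meas n : <<s past_gen X n >> `<=` measurable.
Proof.
apply: smallest_sub; first exact: sigma_algebra_measurable.
by move=> S [k [t [_ ->]]]; exact: mX.
Qed.

Lemma Pr_nEv : Pr (~` Ev) = 0.
Proof.
rewrite probability_setC; last exact: Ev_meas.
apply: (etrans (f_equal (fun v => (1 - v)%E) PrEv)); by rewrite subee.
Qed.

Lemma Pr_eqE S1 S2 : measurable S1 -> measurable S2 -> S1 `&` Ev = S2 `&` Ev ->
  Pr S1 = Pr S2.
Proof.
have mC : measurable (~` Ev) by apply: measurableC; exact: Ev_meas.
have h S : measurable S -> Pr S = Pr (S `&` Ev).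
  move=> mS.
  have z : Pr (S `&` ~` Ev) = 0.
    apply/eqP; rewrite eq_le measure_ge0 andbT -Pr_nEv.
    by apply: le_measure; rewrite ?inE //; exact: measurableI.
  apply: (etrans (measureDI Pr mS mC)); rewrite setDE setCK.
  by rewrite -[RHS]adde0; congr (_ + _); exact: z.
by move=> m1 m2 e; rewrite h // [RHS]h // e.
Qed.

Lemma p_meas t n : measurable_fun setT
  (fun om => imitation_kernel A theta P t (past X n om)).
Proof.
rewrite /imitation_kernel /past; apply: ge0_emeasurable_sum.
- by move=> k om _ Ak; exact: (term_ge0 htheta_pos hP).
- by move=> k Ak; exact: (measfun_comp (fun u => (theta k * P k u t)%:E) (mX _)).
Qed.

Lemma pY_meas r n : measurable_fun setT
  (fun om => imitation_kernel A theta
     (fun k (i j : {x : G | `[< recurrent_part A P x >]}) => P k (val i) (val j)) r (past Yf n om)).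
Proof.
rewrite /imitation_kernel /past; apply: ge0_emeasurable_sum.
- by move=> k om _ Ak; exact: (term_ge0 htheta_pos hP).
- move=> k Ak.
  exact: (measfun_comp (fun u => (theta k * P k (val (insubd y0 u)) (val r))%:E) (mX _)).
Qed.

Lemma int_eqY n r B : measurable B ->
  \int[Pr]_(om in B) imitation_kernel A theta
     (fun k (i j : {x : G | `[< recurrent_part A P x >]}) => P k (val i) (val j)) r (past Yf n om)
  = \int[Pr]_(om in B) imitation_kernel A theta P (val r) (past X n om).
Proof.
move=> mB; apply: ae_eq_integral => //.
- exact: measurable_funS (pY_meas r n).
- exact: measurable_funS (p_meas (val r) n).
exists (~` Ev); split; first by apply: measurableC; exact: Ev_meas.
  exact: Pr_nEv.
move=> om /= nH Eom; apply: nH => _.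
rewrite /imitation_kernel /past; apply: eq_eseriesr => k Ak /=.
by rewrite valY asboolT //; exact: Eom.
Qed.

Lemma Y_compat : compatible Pr (imitation_kernel A theta
     (fun k (i j : {x : G | `[< recurrent_part A P x >]}) => P k (val i) (val j))) Yf.
Proof.
split; first exact: mY.
move=> n r B hB.
have hBX := sigY hB; have mB := sig_meas hBX.
rewrite int_eqY // -(hX.2 n (val r) B hBX).
apply: Pr_eqE; try (apply: measurableI => //; first exact: mY).
  apply: measurableI => //; exact: mX.
apply/seteqP; split => om /= [[h1 h2] h3]; split => //; split => //;
  have Rn := h3 n.
  by rewrite -h1 valY (asboolT Rn).
by apply: val_inj; rewrite valY (asboolT Rn).
Qed.

End Part1.

Section Part2.
Variables (R : realType) (G : finType) (A : pred nat) (theta : nat -> R) (P : nat -> G -> G -> R).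
Hypothesis hP : forall k, A k -> stochastic (P k).
Context {d : measure_display} {Om : measurableType d} (Pr : probability Om R)
  (Y : int -> Om -> {x : G | `[< recurrent_part A P x >]}).
Hypothesis hY : compatible Pr (imitation_kernel A theta
     (fun k (i j : {x : G | `[< recurrent_part A P x >]}) => P k (val i) (val j))) Y.

Local Open Scope ereal_scope.

Lemma sigV n : <<s past_gen (fun n om => val (Y n om)) n >> `<=` <<s past_gen Y n >>.
Proof.
apply: smallest_sub; first exact: smallest_sigma_algebra.
move=> S [k [t [kn ->]]].
apply: (@fin_union_gen _ _ (Y k) (<<s past_gen Y n >>) _ _ _ (fun u => val u = t)).
- exact: sigma_algebra0.
- by move=> S1 S2; exact: sigma_setU.
- by move=> u; apply: sub_sigma_algebra; exists k, u.
Qed.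

Lemma V_compat : compatible Pr (imitation_kernel A theta P) (fun n om => val (Y n om)).
Proof.
split.
  by move=> n t; exact: (meas_pred (hY.1 n) (fun u => val u = t)).
move=> n t B hB; have hBY := sigV hB.
have [Rt|nRt] := pselect (recurrent_part A P t).
  pose r : {x : G | `[< recurrent_part A P x >]} := exist _ t (asboolT Rt).
  have -> : [set om | val (Y n om) = t] = [set om | Y n om = r].
    apply/seteqP; split => om /= h; last by rewrite h.
    by apply: val_inj.
  rewrite (hY.2 n r B hBY); apply: eq_integral => om _.
  by [].
have -> : [set om | val (Y n om) = t] = set0.
  apply/seteqP; split => om //= h; apply: nRt; rewrite -h.
  exact/asboolP/(valP (Y n om)).
rewrite set0I measure0.
transitivity (\int[Pr]_(om in B) (cst 0 om)); first by rewrite integral0.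
apply: eq_integral => om _ /=; apply/esym.
rewrite /imitation_kernel /past eseries0 // => k _ Ak.
rewrite (rec_P0 hP Ak _ nRt) ?mulr0 //.
exact/asboolP/(valP (Y _ om)).
Qed.

End Part2.

Theorem mainTheorem3 (R : realType) (G : finType) (A : pred nat)
  (theta : nat -> R) (P : nat -> G -> G -> R)
  (hA : ~~ A 0%N)
  (htheta_pos : forall k, A k -> 0 < theta k)
  (htheta_sum : (\sum_(k <oo | A k) (theta k)%:E)%E = 1%E)
  (hP : forall k, A k -> stochastic (P k)) :
  let RG := recurrent_part A P in
  let Rsub := {x : G | `[< RG x >]} in
  let p := imitation_kernel A theta P in
  let pR := imitation_kernel A theta
              (fun k (i j : Rsub) => P k (val i) (val j)) in
  (forall (d : measure_display) (Omega : measurableType d)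
          (Pr : probability Omega R) (X : int -> Omega -> G),
     compatible Pr p X ->
     Pr [set om | forall n, RG (X n om)] = 1%E /\
     exists Y : int -> Omega -> Rsub,
       compatible Pr pR Y /\
       Pr [set om | forall n, X n om = val (Y n om)] = 1%E) /\
  (forall (d : measure_display) (Omega : measurableType d)
          (Pr : probability Omega R) (Y : int -> Omega -> Rsub),
     compatible Pr pR Y ->
     compatible Pr p (fun n om => val (Y n om))).
Proof.
move=> RG Rsub p pR; split.
  move=> d Om Pr X hX; split; first exact: (PrEv hA htheta_pos htheta_sum hP hX).
  have [om0 _] : exists om : Om, True.
    apply: contrapT => h.
    have E : (setT : set Om) = set0.
      by apply/seteqP; split => om // _; apply: h; exists om.
    have := probability_setT Pr; rewrite E measure0 => /eqP.
    by rewrite eq_sym onee_eq0.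
  have [y [Ry _]] := escape hP (X 0 om0).
  pose y0 : Rsub := exist _ y (asboolT Ry).
  exists (Yf X y0); split.
    exact: (Y_compat hA htheta_pos htheta_sum hP hX y0).
  rewrite XY_eq; exact: (PrEv hA htheta_pos htheta_sum hP hX).
move=> d Om Pr Y hY; exact: (V_compat hP hY).
Qed.
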